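(* Let $X$ be a real Hilbert space, let $m\ge2$ be an integer, $I=\{1,\dots,m\}$, let $(R_i)_{i\in I}$ be operators $X\to X$, let $r\in I$, let $(\alpha_i)_{i\in I}$ be reals with $\alpha_i\in\left]0,1\right[$ for $i\in I\setminus\{r\}$ and $\alpha_r>0$, let $\delta_i\in\mathbb{R}\setminus\{0\}$, and suppose that for each $i\in I$, $\tfrac1{\delta_i}R_i$ is $\alpha_i$-conically nonexpansive. Set $R=R_m\cdots R_1$ and $$\bar\alpha=\frac{\sum_{i\in I,\,i\neq r}\frac{\alpha_i}{1-\alpha_i}}{1+\sum_{i\in I,\,i\neq r}\frac{\alpha_i}{1-\alpha_i}}.$$ Suppose $\alpha_r\bar\alpha<1$, and set $$\alpha=\begin{cases}\dfrac{\sum_{i=1}^m\frac{\alpha_i}{1-\alpha_i}}{1+\sum_{i=1}^m\frac{\alpha_i}{1-\alpha_i}},&\alpha_r\neq1;\\ 1,&\alpha_r=1.\end{cases}$$ Then there exists a nonexpansive $N\colon X\to X$ such that $R=\delta_m\cdots\delta_1\big((1-\alpha)\mathrm{Id}+\alpha N\big)$.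
   Context: For $\alpha>0$, an operator $T\colon X\to X$ is $\alpha$-conically nonexpansive if there exists a nonexpansive ($1$-Lipschitz) $N\colon X\to X$ with $T=(1-\alpha)\mathrm{Id}+\alpha N$. *)

(* Defs.v *)
From Stdlib Require Import Reals Lra.
Open Scope R_scope.

Record Hilbert := {
  hcar :> Type;
  hzero : hcar;
  hadd : hcar -> hcar -> hcar;
  hopp : hcar -> hcar;
  hscal : R -> hcar -> hcar;
  hinner : hcar -> hcar -> R;
  hadd_assoc : forall x y z, hadd x (hadd y z) = hadd (hadd x y) z;
  hadd_comm : forall x y, hadd x y = hadd y x;
  hadd_zero : forall x, hadd x hzero = x;
  hadd_opp : forall x, hadd x (hopp x) = hzero;
  hscal_assoc : forall a b x, hscal a (hscal b x) = hscal (a * b) x;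
  hscal_one : forall x, hscal 1 x = x;
  hscal_distr_l : forall a x y, hscal a (hadd x y) = hadd (hscal a x) (hscal a y);
  hscal_distr_r : forall a b x, hscal (a + b) x = hadd (hscal a x) (hscal b x);
  hinner_sym : forall x y, hinner x y = hinner y x;
  hinner_lin : forall a x y z,
    hinner (hadd (hscal a x) y) z = a * hinner x z + hinner y z;
  hinner_pos : forall x, 0 <= hinner x x;
  hinner_def : forall x, hinner x x = 0 -> x = hzero;
  hcomplete : forall u : nat -> hcar,
    (forall eps, eps > 0 -> exists N, forall n p, (n >= N)%nat -> (p >= N)%nat ->
       sqrt (hinner (hadd (u n) (hopp (u p))) (hadd (u n) (hopp (u p)))) < eps) ->
    exists l, forall eps, eps > 0 -> exists N, forall n, (n >= N)%nat ->
       sqrt (hinner (hadd (u n) (hopp l)) (hadd (u n) (hopp l))) < eps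
}.

Definition hsub {X : Hilbert} (x y : X) : X := hadd X x (hopp X y).
Definition hnorm {X : Hilbert} (x : X) : R := sqrt (hinner X x x).

Definition nonexpansive {X : Hilbert} (N : X -> X) : Prop :=
  forall x y, hnorm (hsub (N x) (N y)) <= hnorm (hsub x y).

Definition conically_nonexpansive {X : Hilbert} (alpha : R) (T : X -> X) : Prop :=
  exists N : X -> X, nonexpansive N /\
    forall x, T x = hadd X (hscal X (1 - alpha) x) (hscal X alpha (N x)).

Fixpoint comp_ops {X : Type} (Rs : nat -> X -> X) (n : nat) : X -> X :=
  match n with
  | O => fun x => x
  | S k => fun x => Rs (S k) (comp_ops Rs k x)
  end.

Fixpoint sum_1n (f : nat -> R) (n : nat) : R :=
  match n with O => 0 | S k => sum_1n f k + f (S k) end.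
Fixpoint prod_1n (f : nat -> R) (n : nat) : R :=
  match n with O => 1 | S k => prod_1n f k * f (S k) end.

(* Main.v *)
Require Import Defs.
From Stdlib Require Import Reals Lra Lia Psatz.
Open Scope R_scope.

Lemma ip_zerol (X : Hilbert) z : hinner X (hzero X) z = 0.
Proof.
  pose proof (hinner_lin X 1 (hzero X) (hzero X) z) as H.
  rewrite hscal_one, hadd_zero in H. lra.
Qed.
Lemma ip_addl (X : Hilbert) x y z : hinner X (hadd X x y) z = hinner X x z + hinner X y z.
Proof. pose proof (hinner_lin X 1 x y z) as H. rewrite hscal_one in H. lra. Qed.
Lemma ip_scall (X : Hilbert) a x z : hinner X (hscal X a x) z = a * hinner X x z.
Proof. pose proof (hinner_lin X a x (hzero X) z) as H. rewrite hadd_zero, ip_zerol in H. lra. Qed.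
Lemma ip_oppl (X : Hilbert) x z : hinner X (hopp X x) z = - hinner X x z.
Proof. pose proof (ip_addl X x (hopp X x) z) as H. rewrite hadd_opp, ip_zerol in H. lra. Qed.
Lemma ip_addr (X : Hilbert) x y z : hinner X z (hadd X x y) = hinner X z x + hinner X z y.
Proof. rewrite !(hinner_sym X z). apply ip_addl. Qed.
Lemma ip_scalr (X : Hilbert) a x z : hinner X z (hscal X a x) = a * hinner X z x.
Proof. rewrite !(hinner_sym X z). apply ip_scall. Qed.
Lemma ip_oppr (X : Hilbert) x z : hinner X z (hopp X x) = - hinner X z x.
Proof. rewrite !(hinner_sym X z). apply ip_oppl. Qed.

Definition nsq {X : Hilbert} (z : X) : R := hinner X z z.

Ltac expand := unfold hsub, nsq in *;
  repeat (rewrite ?ip_addl, ?ip_addr, ?ip_scall, ?ip_scalr, ?ip_oppl, ?ip_oppr).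
Ltac symnorm := repeat match goal with |- context [hinner ?X ?a ?b] =>
  match goal with |- context [hinner X b a] =>
    tryif (constr_eq a b) then fail else rewrite (hinner_sym X b a) end end.

Definition cone {X : Hilbert} (A B : R) (T : X -> X) : Prop :=
  forall x y, A * nsq (hsub (hsub x y) (hsub (T x) (T y)))
              <= B * (nsq (hsub x y) - nsq (hsub (T x) (T y))).

Lemma cone_ext (X : Hilbert) A B (T T' : X -> X) :
  (forall z, T z = T' z) -> cone A B T -> cone A B T'.
Proof. intros E H x y. rewrite <- !E. apply H. Qed.

Lemma comp_real A1 B1 A2 B2 na nb ab du dw : 0 < B1 -> 0 < B2 ->
  0 < A1*B2 + A2*B1 -> A1*na <= B1*du -> A2*nb <= B2*dw ->
  0 <= (A1*B2)^2*na - 2*(A1*B2)*(A2*B1)*ab + (A2*B1)^2*nb ->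
  A1*A2*(na + 2*ab + nb) <= (A1*B2+A2*B1)*(du+dw).
Proof.
  intros hB1 hB2 hPQ h1 h2 h3.
  set (P := A1*B2) in *. set (Q := A2*B1) in *.
  assert (h : P*na + Q*nb <= B1*B2*(du+dw)).
  { assert (0 <= B2*(B1*du - A1*na)) by (apply Rmult_le_pos; lra).
    assert (0 <= B1*(B2*dw - A2*nb)) by (apply Rmult_le_pos; lra).
    unfold P, Q. nra. }
  assert (h4 : P*Q*(na+2*ab+nb) <= (P+Q)*(P*na+Q*nb)).
  { assert (E : (P+Q)*(P*na+Q*nb) - P*Q*(na+2*ab+nb) = P^2*na - 2*P*Q*ab + Q^2*nb) by ring.
    lra. }
  assert (h5 : (P+Q)*(P*na+Q*nb) <= (P+Q)*(B1*B2*(du+dw))).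
  { apply Rmult_le_compat_l; lra. }
  apply (Rmult_le_reg_l (B1*B2)). nra.
  replace (B1*B2*(A1*A2*(na+2*ab+nb))) with (P*Q*(na+2*ab+nb)) by (unfold P, Q; ring).
  replace (B1*B2*((P+Q)*(du+dw))) with ((P+Q)*(B1*B2*(du+dw))) by ring.
  lra.
Qed.

Lemma cone_comp (X : Hilbert) A1 B1 A2 B2 (T1 T2 : X -> X) :
  0 < B1 -> 0 < B2 -> 0 < A1*B2 + A2*B1 ->
  cone A1 B1 T1 -> cone A2 B2 T2 ->
  cone (A1*A2) (A1*B2+A2*B1) (fun z => T2 (T1 z)).
Proof.
  intros hB1 hB2 hPQ c1 c2 x y. cbv beta.
  pose proof (c1 x y) as H1. pose proof (c2 (T1 x) (T1 y)) as H2.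
  set (u := hsub x y) in *. set (w := hsub (T1 x) (T1 y)) in *.
  set (v := hsub (T2 (T1 x)) (T2 (T1 y))) in *.
  pose proof (hinner_pos X (hsub (hscal X (A1*B2) (hsub u w)) (hscal X (A2*B1) (hsub w v)))) as H3.
  clearbody u w v.
  assert (E1 : nsq (hsub u v) = nsq (hsub u w) + 2 * hinner X (hsub u w) (hsub w v) + nsq (hsub w v))
    by (expand; symnorm; ring).
  assert (E2 : hinner X (hsub (hscal X (A1*B2) (hsub u w)) (hscal X (A2*B1) (hsub w v)))
                       (hsub (hscal X (A1*B2) (hsub u w)) (hscal X (A2*B1) (hsub w v)))
      = (A1*B2)^2 * nsq (hsub u w) - 2*(A1*B2)*(A2*B1)*hinner X (hsub u w) (hsub w v)
        + (A2*B1)^2 * nsq (hsub w v)) by (expand; symnorm; ring).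
  rewrite E2 in H3. rewrite E1.
  replace (nsq u - nsq v) with ((nsq u - nsq w) + (nsq w - nsq v)) by ring.
  apply comp_real; assumption.
Qed.

Lemma cone_scale (X : Hilbert) A B (T : X -> X) D :
  D <> 0 -> cone A B T -> cone A B (fun z => hscal X (/ D) (T (hscal X D z))).
Proof.
  intros hD c x y. cbv beta.
  pose proof (c (hscal X D x) (hscal X D y)) as H.
  set (p := T (hscal X D x)) in *. set (q := T (hscal X D y)) in *. clearbody p q.
  assert (E1 : nsq (hsub (hsub x y) (hsub (hscal X (/D) p) (hscal X (/D) q)))
     = / (D*D) * nsq (hsub (hsub (hscal X D x) (hscal X D y)) (hsub p q)))
    by (expand; symnorm; field; auto).
  assert (E2 : nsq (hsub x y) - nsq (hsub (hscal X (/D) p) (hscal X (/D) q))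
     = / (D*D) * (nsq (hsub (hscal X D x) (hscal X D y)) - nsq (hsub p q)))
    by (expand; symnorm; field; auto).
  rewrite E1, E2.
  assert (0 < / (D*D)) by (apply Rinv_0_lt_compat; nra).
  nra.
Qed.

Lemma conic_cone (X : Hilbert) a (T : X -> X) :
  conically_nonexpansive a T -> cone (1 - a) a T.
Proof.
  intros [N [HN HT]] x y. rewrite !HT.
  pose proof (HN x y) as H. unfold hnorm in H.
  apply sqrt_le_0 in H; try apply hinner_pos.
  set (nx := N x) in *. set (ny := N y) in *. clearbody nx ny.
  assert (E : a * (nsq (hsub x y) - nsq (hsub (hadd X (hscal X (1 - a) x) (hscal X a nx))
                                           (hadd X (hscal X (1 - a) y) (hscal X a ny))))
     - (1 - a) * nsq (hsub (hsub x y) (hsub (hadd X (hscal X (1 - a) x) (hscal X a nx))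
                                           (hadd X (hscal X (1 - a) y) (hscal X a ny))))
     = a * a * (nsq (hsub x y) - nsq (hsub nx ny))) by (expand; symnorm; ring).

  assert (0 <= a * a * (nsq (hsub x y) - nsq (hsub nx ny))).
  { apply Rmult_le_pos. nra. unfold nsq. lra. }
  lra.
Qed.

Lemma cone_to_N (X : Hilbert) A B (T : X -> X) :
  cone A B T -> 0 < B -> 0 < A + B ->
  exists N : X -> X, nonexpansive N /\
    forall x, T x = hadd X (hscal X (1 - B/(A+B)) x) (hscal X (B/(A+B)) (N x)).
Proof.
  intros c hB hs. set (a := B/(A+B)).
  assert (ha : 0 < a) by (unfold a; apply Rdiv_lt_0_compat; lra).
  exists (fun x => hscal X (/a) (hadd X (T x) (hopp X (hscal X (1-a) x)))). split.
  - intros x y. unfold hnorm. apply sqrt_le_1_alt.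
    pose proof (c x y) as H.
    set (tx := T x) in *. set (ty := T y) in *. clearbody tx ty.
    assert (E : hinner X (hsub x y) (hsub x y) -
      hinner X (hsub (hscal X (/a) (hadd X tx (hopp X (hscal X (1-a) x))))
                     (hscal X (/a) (hadd X ty (hopp X (hscal X (1-a) y)))))
               (hsub (hscal X (/a) (hadd X tx (hopp X (hscal X (1-a) x))))
                     (hscal X (/a) (hadd X ty (hopp X (hscal X (1-a) y)))))
      = (A+B)/(B*B) * (B * (nsq (hsub x y) - nsq (hsub tx ty)) - A * nsq (hsub (hsub x y) (hsub tx ty)))).
    { unfold a. expand; symnorm. field. lra. }
    assert (0 <= (A+B)/(B*B) * (B * (nsq (hsub x y) - nsq (hsub tx ty)) - A * nsq (hsub (hsub x y) (hsub tx ty)))).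
    { apply Rmult_le_pos. apply Rlt_le, Rdiv_lt_0_compat; nra. lra. }
    lra.
  - intros x. rewrite hscal_assoc, Rinv_r, hscal_one by lra.
    rewrite (hadd_comm X (T x)), hadd_assoc, hadd_opp, hadd_comm, hadd_zero. reflexivity.
Qed.


Definition kap (al : nat -> R) := fun i => al i / (1 - al i).
Definition gg (al : nat -> R) (r : nat) := fun i => if Nat.eqb i r then 0 else al i / (1 - al i).
Definition Qk (al : nat -> R) r k := prod_1n (fun j => if Nat.eqb j r then 1 else 1 - al j) k.
Definition Ak al r k := Qk al r k * (if Nat.leb r k then 1 - al r else 1).
Definition Bk al r k := Qk al r k *
  (if Nat.leb r k then al r + (1 - al r) * sum_1n (gg al r) k else sum_1n (gg al r) k).


Lemma Kp_nonneg al r m : (forall i, (1 <= i <= m)%nat -> i <> r -> 0 < al i < 1) ->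
  forall k, (k <= m)%nat -> 0 <= sum_1n (gg al r) k.
Proof.
  intros H. induction k; intros hk; simpl. lra.
  unfold gg at 2. destruct (Nat.eqb_spec (S k) r). specialize (IHk ltac:(lia)). lra.
  specialize (IHk ltac:(lia)). specialize (H (S k) ltac:(lia) n).
  assert (0 < al (S k) / (1 - al (S k))) by (apply Rdiv_lt_0_compat; lra). lra.
Qed.

Lemma Kp_pos al r m : (forall i, (1 <= i <= m)%nat -> i <> r -> 0 < al i < 1) ->
  forall k, (1 <= k <= m)%nat -> (k < r)%nat -> 0 < sum_1n (gg al r) k.
Proof.
  intros H k hk hr. destruct k. lia. simpl.
  pose proof (Kp_nonneg al r m H k ltac:(lia)).
  unfold gg at 2. destruct (Nat.eqb_spec (S k) r). lia.
  specialize (H (S k) ltac:(lia) n).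
  assert (0 < al (S k) / (1 - al (S k))) by (apply Rdiv_lt_0_compat; lra). lra.
Qed.

Lemma Kp_le al r m : (forall i, (1 <= i <= m)%nat -> i <> r -> 0 < al i < 1) ->
  forall j k, (k + j <= m)%nat -> sum_1n (gg al r) k <= sum_1n (gg al r) (k + j).
Proof.
  intros H. induction j; intros k hk. rewrite Nat.add_0_r; lra.
  replace (k + S j)%nat with (S (k + j)) by lia. simpl.
  specialize (IHj k ltac:(lia)).
  unfold gg at 3. destruct (Nat.eqb_spec (S (k+j)) r). lra.
  specialize (H (S (k+j)) ltac:(lia) n).
  assert (0 < al (S (k+j)) / (1 - al (S (k+j)))) by (apply Rdiv_lt_0_compat; lra). lra.
Qed.

Lemma Qk_pos al r m : (forall i, (1 <= i <= m)%nat -> i <> r -> 0 < al i < 1) ->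
  forall k, (k <= m)%nat -> 0 < Qk al r k.
Proof.
  intros H. induction k; intros hk; unfold Qk in *; cbn [prod_1n]. lra.
  specialize (IHk ltac:(lia)).
  destruct (Nat.eqb_spec (S k) r). nra.
  specialize (H (S k) ltac:(lia) n). nra.
Qed.

Lemma AB_rec al r m : (1 <= r)%nat -> (forall i, (1 <= i <= m)%nat -> i <> r -> 0 < al i < 1) ->
  forall k, (S k <= m)%nat ->
  Ak al r (S k) = Ak al r k * (1 - al (S k)) /\
  Bk al r (S k) = Ak al r k * al (S k) + (1 - al (S k)) * Bk al r k.
Proof.
  intros hr H k hk. unfold Ak, Bk, Qk. cbn [prod_1n sum_1n]. unfold gg at 2.
  destruct (Nat.eqb_spec (S k) r).
  - subst r. replace (Nat.leb (S k) (S k)) with true by (symmetry; apply Nat.leb_le; lia).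
    replace (Nat.leb (S k) k) with false by (symmetry; apply Nat.leb_gt; lia).
    split; ring.
  - specialize (H (S k) ltac:(lia) n).
    assert (G: gg al r (S k) = al (S k)/(1-al(S k))) by
      (unfold gg; rewrite (proj2 (Nat.eqb_neq _ _) n); reflexivity). rewrite G.
    destruct (Nat.leb_spec r k).
    + replace (Nat.leb r (S k)) with true by (symmetry; apply Nat.leb_le; lia).
      split. ring. field. lra.
    + replace (Nat.leb r (S k)) with false by (symmetry; apply Nat.leb_gt; lia).
      split. ring. field. lra.
Qed.

Lemma sum_kap al r : (1 <= r)%nat -> forall k, sum_1n (kap al) k =
  sum_1n (gg al r) k + (if Nat.leb r k then kap al r else 0).
Proof.
  intros hr. induction k; cbn [sum_1n].
  replace (Nat.leb r 0) with false by (symmetry; apply Nat.leb_gt; lia). ring.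
  rewrite IHk. destruct (Nat.eqb_spec (S k) r).
  - assert (G: gg al r (S k) = 0) by
      (unfold gg; rewrite (proj2 (Nat.eqb_eq _ _) e); reflexivity). rewrite G.
    subst r. replace (Nat.leb (S k) (S k)) with true by (symmetry; apply Nat.leb_le; lia).
    replace (Nat.leb (S k) k) with false by (symmetry; apply Nat.leb_gt; lia). ring.
  - assert (G: gg al r (S k) = al (S k)/(1-al(S k))) by
      (unfold gg; rewrite (proj2 (Nat.eqb_neq _ _) n); reflexivity). rewrite G.
    destruct (Nat.leb_spec r k).
    + replace (Nat.leb r (S k)) with true by (symmetry; apply Nat.leb_le; lia). unfold kap; ring.
    + replace (Nat.leb r (S k)) with false by (symmetry; apply Nat.leb_gt; lia). unfold kap; ring.
Qed.

Lemma prod_nz d m : (forall i, (1 <= i <= m)%nat -> d i <> 0) ->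
  forall k, (k <= m)%nat -> prod_1n d k <> 0.
Proof.
  intros H. induction k; intros hk; simpl. lra.
  apply Rmult_integral_contrapositive. split. apply IHk; lia. apply H; lia.
Qed.

Theorem mainTheorem10
  (X : Hilbert) (m : nat) (Rs : nat -> X -> X) (r : nat)
  (alphas deltas : nat -> R) :
  (2 <= m)%nat ->
  (1 <= r <= m)%nat ->
  (forall i, (1 <= i <= m)%nat -> i <> r -> 0 < alphas i < 1) ->
  0 < alphas r ->
  (forall i, (1 <= i <= m)%nat -> deltas i <> 0) ->
  (forall i, (1 <= i <= m)%nat ->
     conically_nonexpansive (alphas i) (fun x => hscal X (/ deltas i) (Rs i x))) ->
  let S' := sum_1n (fun i => if Nat.eqb i r then 0
                             else alphas i / (1 - alphas i)) m in
  let alpha_bar := S' / (1 + S') in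
  alphas r * alpha_bar < 1 ->
  let S := sum_1n (fun i => alphas i / (1 - alphas i)) m in
  let alpha := if Req_EM_T (alphas r) 1 then 1 else S / (1 + S) in
  exists N : X -> X, nonexpansive N /\
    forall x, comp_ops Rs m x =
      hscal X (prod_1n deltas m)
        (hadd X (hscal X (1 - alpha) x) (hscal X alpha (N x))).
Proof.
  intros hm hr hal har hdel hcn S' abar hcond SS alpha.
  set (K := sum_1n (gg alphas r) m).
  assert (HK0 : 0 <= K) by (apply (Kp_nonneg alphas r m hal); lia).
  assert (hc2 : alphas r * K < 1 + K).
  { unfold abar, S' in hcond. fold (gg alphas r) in hcond. fold K in hcond.
    assert (hh : alphas r * K = (alphas r * (K / (1 + K))) * (1 + K)) by (field; lra).
    rewrite hh. nra. }
  assert (Bpos : forall k, (1 <= k <= m)%nat -> 0 < Bk alphas r k).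
  { intros k hk. unfold Bk. pose proof (Qk_pos alphas r m hal k ltac:(lia)).
    destruct (Nat.leb_spec r k).
    - assert (h1 : 0 <= sum_1n (gg alphas r) k) by (apply (Kp_nonneg alphas r m hal); lia).
      assert (h2 : sum_1n (gg alphas r) k <= K).
      { unfold K. pose proof (Kp_le alphas r m hal (m - k) k ltac:(lia)) as hh.
        replace (k + (m - k))%nat with m in hh by lia. exact hh. }
      apply Rmult_lt_0_compat. lra.
      destruct (Rle_lt_dec (alphas r) 1). nra. nra.
    - apply Rmult_lt_0_compat. lra. apply (Kp_pos alphas r m hal); lia. }
  set (C := fun k x => hscal X (/ prod_1n deltas k) (comp_ops Rs k x)).
  assert (HC : forall k, (1 <= k <= m)%nat -> cone (Ak alphas r k) (Bk alphas r k) (C k)).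
  { induction k; intros hk. lia.
    destruct (AB_rec alphas r m ltac:(lia) hal k ltac:(lia)) as [EA EB].
    rewrite EA, EB.
    assert (hpk : prod_1n deltas k <> 0) by (apply (prod_nz deltas m hdel); lia).
    pose proof (cone_scale X _ _ _ (prod_1n deltas k) hpk (conic_cone X _ _ (hcn (S k) ltac:(lia)))) as cs.
    assert (haS : 0 < alphas (S k)).
    { destruct (Nat.eq_dec (S k) r). subst r; lra. apply (hal (S k)); lia. }
    destruct k.
    - unfold Ak, Bk, Qk. replace (Nat.leb r 0) with false by (symmetry; apply Nat.leb_gt; lia).
      cbn [prod_1n sum_1n].
      apply (cone_ext X _ _ (fun x => hscal X (/ deltas 1%nat) (Rs 1%nat x))).
      { intros z. unfold C. cbn [comp_ops prod_1n]. f_equal. f_equal. ring. }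
      replace (1 * 1 * (1 - alphas 1%nat)) with (1 - alphas 1%nat) by ring.
      replace (1 * 1 * alphas 1%nat + (1 - alphas 1%nat) * (1 * 0)) with (alphas 1%nat) by ring.
      apply conic_cone, hcn. lia.
    - specialize (IHk ltac:(lia)).
      pose proof (Bpos (S (S k)) ltac:(lia)) as hB.
      rewrite EB in hB.
      pose proof (cone_comp X _ _ _ _ _ _ (Bpos (S k) ltac:(lia)) haS hB IHk cs) as cc.
      refine (cone_ext X _ _ _ _ _ cc).
      intros z. unfold C. cbv beta. cbn [comp_ops prod_1n].
      rewrite (hscal_assoc X (prod_1n deltas (S k))), Rinv_r, hscal_one by exact hpk.
      rewrite !hscal_assoc. f_equal. rewrite <- Rinv_mult. reflexivity. }
  pose proof (HC m ltac:(lia)) as Hm.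
  assert (hr' : Nat.leb r m = true) by (apply Nat.leb_le; lia).
  assert (hQ : 0 < Qk alphas r m) by (apply (Qk_pos alphas r m hal); lia).
  assert (hs : 0 < Ak alphas r m + Bk alphas r m).
  { unfold Ak, Bk. rewrite hr'. fold K.
    replace (Qk alphas r m * (1 - alphas r) + Qk alphas r m * (alphas r + (1 - alphas r) * K))
      with (Qk alphas r m * (1 + (1 - alphas r) * K)) by ring.
    apply Rmult_lt_0_compat; nra. }
  destruct (cone_to_N X _ _ _ Hm (Bpos m ltac:(lia)) hs) as [N [HN HT]].
  assert (Ha : alpha = Bk alphas r m / (Ak alphas r m + Bk alphas r m)).
  { unfold alpha. unfold Ak, Bk in hs |- *. rewrite hr' in hs |- *. fold K in hs |- *.
    destruct (Req_EM_T (alphas r) 1) as [e|n].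
    - rewrite e. field. rewrite e in hs. lra.
    - unfold SS. change (sum_1n (fun i => alphas i / (1 - alphas i)) m) with (sum_1n (kap alphas) m).
      rewrite (sum_kap alphas r ltac:(lia) m), hr'. fold K. unfold kap.
      assert (n' : 1 - alphas r <> 0) by lra.
      assert (hh : 1 + (1 - alphas r) * K <> 0) by nra.
      assert (hh2 : 1 + (K + alphas r / (1 - alphas r)) <> 0).
      { intro E. apply hh. replace (1 + (1 - alphas r) * K) with
          ((1 - alphas r) * (1 + (K + alphas r / (1 - alphas r)))) by (field; exact n').
        rewrite E. ring. }
      field. split. lra. split. lra. nra. }
  exists N. split. exact HN.
  intros x. rewrite Ha, <- HT. unfold C.
  rewrite hscal_assoc, Rinv_r, hscal_one. reflexivity.
  apply (prod_nz deltas m hdel); lia.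
Qed.
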